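(* Let $n\ge 5$ and $M\ge1$ be integers, $U=\{0,1,\ldots,M-1\}$, and let $\phi:\binom{U}{2}\to\{\text{red},\text{blue}\}$ be a $2$-coloring such that every $n$-element subset of $U$ contains three elements $x<y<z$ with $\phi(x,y)=\phi(y,z)\ne\phi(x,z)$. Let $H=H_\phi$ be the $4$-uniform hypergraph on $V=\{0,\ldots,2^M-1\}$ defined below. Then the independence number of $H$ satisfies $\alpha(H)<2^6n^5+1$, i.e., $H$ has no independent set of size $2^6n^5+1$.
   Context: Every $a\in V=\{0,\ldots,2^M-1\}$ is written in binary as $a=\sum_{i=0}^{M-1}a(i)2^i$ with $a(i)\in\{0,1\}$. For $a\ne b$ in $V$, $\delta(a,b)$ denotes the largest index $i$ with $a(i)\ne b(i)$; thus $\delta(a,b)\in U$. For a pair $\{x,y\}$ of distinct elements of $U$ we write $\phi(x,y)=\phi(y,x)$ for its color. For a $4$-tuple $v_1<v_2<v_3<v_4$ of $V$, set $\delta_i=\delta(v_i,v_{i+1})$ for $i=1,2,3$. The $4$-tuple $\{v_1,v_2,v_3,v_4\}$ is an edge of $H$ if and only if one of the following holds: (i) $\delta_1<\delta_2<\delta_3$ or $\delta_1>\delta_2>\delta_3$, and $\phi(\delta_1,\delta_2)=\phi(\delta_2,\delta_3)\ne\phi(\delta_1,\delta_3)$; (ii) $\delta_1>\delta_2<\delta_3$, $\delta_1>\delta_3$, and $\phi(\delta_1,\delta_2)\ne\phi(\delta_2,\delta_3)$; (iii) $\delta_1>\delta_2<\delta_3$, $\delta_1<\delta_3$, and $\phi(\delta_1,\delta_2)=\phi(\delta_1,\delta_3)=\phi(\delta_2,\delta_3)$.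 An independent set of $H$ is a set of vertices containing no edge of $H$; $\alpha(H)$ is the maximum size of an independent set. *)

(* Defs.v *)
From mathcomp Require Import all_boot.
Set Implicit Arguments. Unset Strict Implicit. Unset Printing Implicit Defensive.

Definition bit (a i : nat) : bool := odd (a %/ 2 ^ i).

(* delta(a,b) = largest index i < M with a(i) <> b(i) (meaningful for a <> b in V) *)
Definition delta (M a b : nat) : nat :=
  \max_(i < M | bit a i != bit b i) i.

(* edge predicate of H_phi for v1 < v2 < v3 < v4 ; phi is a colouring given
   on U x U (red = true, blue = false), assumed symmetric. *)
Definition is_edge (M : nat) (phi : nat -> nat -> bool) (v1 v2 v3 v4 : nat) : bool :=
  let d1 := delta M v1 v2 in
  let d2 := delta M v2 v3 in
  let d3 := delta M v3 v4 in
  [|| (((d1 < d2) && (d2 < d3)) || ((d2 < d1) && (d3 < d2))) &&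
        ((phi d1 d2 == phi d2 d3) && (phi d2 d3 != phi d1 d3)),
      [&& d2 < d1, d2 < d3, d3 < d1 & phi d1 d2 != phi d2 d3]
    | [&& d2 < d1, d2 < d3, d1 < d3,
          phi d1 d2 == phi d1 d3 & phi d1 d3 == phi d2 d3]].

Definition independent (M : nat) (phi : nat -> nat -> bool) (S : {set 'I_(2 ^ M)}) : Prop :=
  forall v1 v2 v3 v4 : 'I_(2 ^ M),
    v1 \in S -> v2 \in S -> v3 \in S -> v4 \in S ->
    v1 < v2 -> v2 < v3 -> v3 < v4 ->
    ~~ is_edge M phi v1 v2 v3 v4.
Arguments independent : clear implicits.
Arguments is_edge : clear implicits.

(* Main.v *)
Require Import Defs.
From mathcomp Require Import all_boot.
From mathcomp Require Import zify.
Set Implicit Arguments. Unset Strict Implicit. Unset Printing Implicit Defensive.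


Lemma bit0 a : bit a 0 = odd a.
Proof. by rewrite /bit expn0 divn1. Qed.

Lemma bitS a i : bit a i.+1 = bit (a %/ 2) i.
Proof. by rewrite /bit expnS divnMA. Qed.

Lemma bit_div a k i : bit (a %/ 2 ^ k) i = bit a (k + i).
Proof. by rewrite /bit -divnMA -expnD. Qed.

Lemma bit_big a i : a < 2 ^ i -> bit a i = false.
Proof. by move=> h; rewrite /bit divn_small. Qed.

Lemma bits_eq m a b : a < 2 ^ m -> b < 2 ^ m ->
  (forall i, i < m -> bit a i = bit b i) -> a = b.
Proof.
elim: m a b => [|m IH] a b.
  by rewrite expn0 !ltnS !leqn0 => /eqP-> /eqP->.
move=> ha hb h.
have h0 := h 0 isT; rewrite !bit0 in h0.
have hd : a %/ 2 = b %/ 2.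
  apply: IH.
  - by rewrite ltn_divLR // -expnSr.
  - by rewrite ltn_divLR // -expnSr.
  by move=> i hi; rewrite -!bitS; apply: h.
by rewrite (divn_eq a 2) (divn_eq b 2) hd !modn2 h0.
Qed.

Lemma bits_eq_all a b : (forall i, bit a i = bit b i) -> a = b.
Proof.
move=> h; apply: (@bits_eq (a + b)) => //.
  by apply: (leq_trans (ltn_expl a (isT : 1 < 2))); rewrite leq_exp2l // leq_addr.
by apply: (leq_trans (ltn_expl b (isT : 1 < 2))); rewrite leq_exp2l // leq_addl.
Qed.

Lemma bit_cmp a b d : (forall i, d < i -> bit a i = bit b i) ->
  bit a d = false -> bit b d = true -> a < b.
Proof.
move=> hi ha hb.
have hq : a %/ 2 ^ d.+1 = b %/ 2 ^ d.+1.
  by apply: bits_eq_all => i; rewrite !bit_div; apply: hi; rewrite addSn ltnS leq_addr.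
have ea : a %/ 2 ^ d = (a %/ 2 ^ d.+1) * 2 + 0.
  by rewrite {1}(divn_eq (a %/ 2 ^ d) 2) -divnMA -expnSr modn2; move: ha; rewrite /bit => ->.
have eb : b %/ 2 ^ d = (a %/ 2 ^ d.+1) * 2 + 1.
  by rewrite hq {1}(divn_eq (b %/ 2 ^ d) 2) -divnMA -expnSr modn2; move: hb; rewrite /bit => ->.
have : a %/ 2 ^ d < b %/ 2 ^ d by rewrite ea eb addn0 addn1.
apply: contraTT; rewrite -!leqNgt => hba; exact: leq_div2r.
Qed.

Lemma delta_sym M a b : delta M a b = delta M b a.
Proof. by rewrite /delta; apply: eq_bigl => i; rewrite eq_sym. Qed.

Lemma deltaP M a b : a < 2 ^ M -> b < 2 ^ M -> a != b ->
  [/\ delta M a b < M, bit a (delta M a b) != bit b (delta M a b) &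
      forall i, delta M a b < i -> bit a i = bit b i].
Proof.
move=> ha hb hab.
have [i0 hi0] : exists i : 'I_M, bit a i != bit b i.
  apply/existsP; apply: contraNT hab; rewrite negb_exists => /forallP h.
  apply/eqP; apply: (bits_eq ha hb) => i hi.
  by move: (h (Ordinal hi)); rewrite negbK => /eqP.
rewrite /delta (bigmax_eq_arg i0) //; case: arg_maxnP => //= j Pj maxj.
split=> // i hji.
case: (ltnP i M) => hiM.
  apply/eqP; apply: contraTT hji => hne; rewrite -leqNgt.
  exact: (maxj (Ordinal hiM)).
rewrite !bit_big //.
  by apply: leq_trans hb _; rewrite leq_exp2l.
by apply: leq_trans ha _; rewrite leq_exp2l.
Qed.

Lemma delta_eq M a b d : a < 2 ^ M -> b < 2 ^ M -> d < M ->
  bit a d != bit b d -> (forall i, d < i -> bit a i = bit b i) -> delta M a b = d.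
Proof.
move=> ha hb hd hne hi.
have hab : a != b by apply: contraNneq hne => ->.
case: (deltaP ha hb hab) => h1 h2 h3.
apply/eqP; rewrite eqn_leq; apply/andP; split.
  rewrite leqNgt; apply/negP => /hi; exact/eqP.
rewrite leqNgt; apply/negP => /h3; exact/eqP.
Qed.

Lemma delta_lt M a b : a < 2 ^ M -> b < 2 ^ M -> a != b ->
  (a < b) = bit b (delta M a b).
Proof.
move=> ha hb hab; case: (deltaP ha hb hab) => _ hne hi.
case hbd: (bit b (delta M a b)).
  apply: (bit_cmp hi) => //; move: hne; rewrite hbd; by case: (bit a _).
apply/negbTE; rewrite -leqNgt; apply: ltnW.
apply: (bit_cmp (d := delta M a b)) => //.
  by move=> i /hi ->.
by move: hne; rewrite hbd; case: (bit a _).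
Qed.


Definition agree (x y e : nat) := forall i, e < i -> bit x i = bit y i.
Definition sep (x y e : nat) := bit x e != bit y e /\ agree x y e.

Lemma sep_sym x y e : sep x y e -> sep y x e.
Proof. by case=> h1 h2; split; [rewrite eq_sym | move=> i /h2]. Qed.

Lemma agree_refl x e : agree x x e. Proof. by []. Qed.

Lemma sep_trans w v x e e' : sep w v e -> agree x v e' -> e' < e -> sep w x e.
Proof.
case=> h1 h2 hx he; split.
  by rewrite hx.
by move=> i hi; rewrite h2 // hx //; apply: ltn_trans hi.
Qed.

Lemma sep_delta M x y e : x < 2 ^ M -> y < 2 ^ M -> e < M -> sep x y e ->
  delta M x y = e /\ (x < y) = bit y e.
Proof.
move=> hx hy he [h1 h2].
have hxy : x != y by apply: contraNneq h1 => ->.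
have hd := delta_eq hx hy he h1 h2.
by split=> //; rewrite (delta_lt hx hy hxy) hd.
Qed.

Definition C (l1 l2 a b c : bool) :=
  if l1 == l2 then ~~ ((a == b) && (b != c))
  else if l1 then a == c else ~~ ((a == b) && (b == c)).

Definition lev M (S : {set 'I_(2 ^ M)}) (v : 'I_(2 ^ M)) : seq nat :=
  [seq e <- rev (iota 0 M) | [exists u in S, (u != v) && (delta M u v == e)]].

Definition word M (S : {set 'I_(2 ^ M)}) (v : 'I_(2 ^ M)) : seq bool :=
  [seq bit v e | e <- lev S v].

Lemma levP M (S : {set 'I_(2 ^ M)}) v e : v \in S -> e \in lev S v ->
  e < M /\ exists2 u, u \in S & sep u v e.
Proof.
move=> vS; rewrite mem_filter mem_rev mem_iota add0n => /andP[/existsP[u /and3P[uS uv /eqP de]] /andP[_ eM]].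
split=> //; exists u => //.
have [h1 h2 h3] := deltaP (ltn_ord u) (ltn_ord v) uv.
by rewrite -de; split.
Qed.

Lemma indep_tuple M phi (S : {set 'I_(2 ^ M)}) (b1 b2 b3 b4 : 'I_(2 ^ M)) d1 d2 d3 :
  independent M phi S -> b1 \in S -> b2 \in S -> b3 \in S -> b4 \in S ->
  d1 < M -> d2 < M -> d3 < M ->
  sep b1 b2 d1 -> sep b2 b3 d2 -> sep b3 b4 d3 ->
  b1 < b2 -> b2 < b3 -> b3 < b4 ->
  ~~ [|| (((d1 < d2) && (d2 < d3)) || ((d2 < d1) && (d3 < d2))) &&
        ((phi d1 d2 == phi d2 d3) && (phi d2 d3 != phi d1 d3)),
      [&& d2 < d1, d2 < d3, d3 < d1 & phi d1 d2 != phi d2 d3]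
    | [&& d2 < d1, d2 < d3, d1 < d3,
          phi d1 d2 == phi d1 d3 & phi d1 d3 == phi d2 d3]].
Proof.
move=> hI h1 h2 h3 h4 m1 m2 m3 s1 s2 s3 l1 l2 l3.
have := hI _ _ _ _ h1 h2 h3 h4 l1 l2 l3.
rewrite /is_edge.
case: (sep_delta (ltn_ord b1) (ltn_ord b2) m1 s1) => -> _.
case: (sep_delta (ltn_ord b2) (ltn_ord b3) m2 s2) => -> _.
by case: (sep_delta (ltn_ord b3) (ltn_ord b4) m3 s3) => -> _.
Qed.

Lemma constr M phi (S : {set 'I_(2 ^ M)}) v e1 e2 e3 :
  independent M phi S ->
  (forall x y, x < M -> y < M -> phi x y = phi y x) ->
  v \in S -> e1 \in lev S v -> e2 \in lev S v -> e3 \in lev S v ->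
  e3 < e2 -> e2 < e1 ->
  C (bit v e1) (bit v e2) (phi e3 e2) (phi e2 e1) (phi e3 e1).
Proof.
move=> hI hsym vS /(levP vS) [m1 [w1 w1S s1]] /(levP vS) [m2 [w2 w2S s2]]
  /(levP vS) [m3 [w3 w3S s3]] h32 h21.
have h31 : e3 < e1 by apply: ltn_trans h21.
have [lo [hi [loS hiS lohi slh [alo ahi]]]] : exists lo hi : 'I_(2 ^ M),
   [/\ lo \in S, hi \in S, lo < hi, sep lo hi e3 & agree lo v e3 /\ agree hi v e3].
  case: (sep_delta (ltn_ord w3) (ltn_ord v) m3 s3) => _ o.
  case hb: (bit v e3).
    exists w3, v; split => //; first by rewrite o hb.
    by split => //; case: s3.
  exists v, w3; split => //.
  - have : w3 != v :> nat by case: s3 => h _; apply: contraNneq h => ->.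
    by rewrite neq_ltn o hb.
  - exact: sep_sym.
  by split => //; case: s3 => _ a; move=> i /a ->.
have s12 : sep w1 w2 e1 by apply: (sep_trans s1 _ h21); case: s2.
have s1l : sep w1 lo e1 by apply: (sep_trans s1 alo h31).
have s1h : sep w1 hi e1 by apply: (sep_trans s1 ahi h31).
have s2l : sep w2 lo e2 by apply: (sep_trans s2 alo h32).
have s2h : sep w2 hi e2 by apply: (sep_trans s2 ahi h32).
have bl1 : bit lo e1 = bit v e1 by apply: alo.
have bh1 : bit hi e1 = bit v e1 by apply: ahi.
have bl2 : bit lo e2 = bit v e2 by apply: alo.
have bh2 : bit hi e2 = bit v e2 by apply: ahi.
have b21 : bit w2 e1 = bit v e1 by case: s2 => _ ->.
case: (sep_delta (ltn_ord w1) (ltn_ord w2) m1 s12) => _ o12.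
case: (sep_delta (ltn_ord w1) (ltn_ord lo) m1 s1l) => _ o1l.
case: (sep_delta (ltn_ord w1) (ltn_ord hi) m1 s1h) => _ o1h.
case: (sep_delta (ltn_ord w2) (ltn_ord lo) m2 s2l) => _ o2l.
case: (sep_delta (ltn_ord w2) (ltn_ord hi) m2 s2h) => _ o2h.
have n12 : (e1 < e2) = false by apply/negbTE; rewrite -leqNgt ltnW.
have n23 : (e2 < e3) = false by apply/negbTE; rewrite -leqNgt ltnW.
have n13 : (e1 < e3) = false by apply/negbTE; rewrite -leqNgt ltnW.
have p12 := hsym e1 e2 m1 m2.
have p23 := hsym e2 e3 m2 m3.
have p13 := hsym e1 e3 m1 m3.
have gt a b : (a < b) = false -> a != b :> nat -> b < a.
  by move=> /negbT; rewrite -leqNgt leq_eqVlt eq_sym => /orP[->|].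
have w12 : w1 != w2 :> nat by case: s12 => h _; apply: contraNneq h => ->.
have w1l : w1 != lo :> nat by case: s1l => h _; apply: contraNneq h => ->.
have w1h : w1 != hi :> nat by case: s1h => h _; apply: contraNneq h => ->.
have w2l : w2 != lo :> nat by case: s2l => h _; apply: contraNneq h => ->.
have w2h : w2 != hi :> nat by case: s2h => h _; apply: contraNneq h => ->.
rewrite /C; case E1: (bit v e1); case E2: (bit v e2) => /=.
- (* AA: w1 < w2 < lo < hi *)
  have := indep_tuple hI w1S w2S loS hiS m1 m2 m3 s12 s2l slh _ _ lohi.
  rewrite o12 b21 E1 o2l bl2 E2 => /(_ isT isT).
  rewrite ?h21 ?h32 ?h31 ?n12 ?n23 ?n13 /= ?p12 ?p23 ?p13.
  by case: (phi e3 e2); case: (phi e2 e1); case: (phi e3 e1).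
- (* AB: w1 < lo < hi < w2 *)
  have := indep_tuple hI w1S loS hiS w2S m1 m3 m2 s1l slh (sep_sym s2h) _ lohi _.
  rewrite o1l bl1 E1 => /(_ isT).
  have : hi < w2.
    by apply: gt; [rewrite o2h bh2 E2 | done].
  move=> -> /(_ isT).
  rewrite ?h21 ?h32 ?h31 ?n12 ?n23 ?n13 /= ?p12 ?p23 ?p13.
  by case: (phi e3 e2); case: (phi e2 e1); case: (phi e3 e1).
- (* BA: w2 < lo < hi < w1 *)
  have := indep_tuple hI w2S loS hiS w1S m2 m3 m1 s2l slh (sep_sym s1h) _ lohi _.
  rewrite o2l bl2 E2 => /(_ isT).
  have : hi < w1.
    by apply: gt; [rewrite o1h bh1 E1 | done].
  move=> -> /(_ isT).
  rewrite ?h21 ?h32 ?h31 ?n12 ?n23 ?n13 /= ?p12 ?p23 ?p13.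
  by case: (phi e3 e2); case: (phi e2 e1); case: (phi e3 e1).
(* BB: lo < hi < w2 < w1 *)
have := indep_tuple hI loS hiS w2S w1S m3 m2 m1 slh (sep_sym s2h) (sep_sym s12) lohi _ _.
have : hi < w2.
    by apply: gt; [rewrite o2h bh2 E2 | done].
move=> -> /(_ isT).
have : w2 < w1.
    by apply: gt; [rewrite o12 b21 E1 | done].
move=> -> /(_ isT).
rewrite ?h21 ?h32 ?h31 ?n12 ?n23 ?n13 /= ?p12 ?p23 ?p13.
by case: (phi e3 e2); case: (phi e2 e1); case: (phi e3 e1).
Qed.


Lemma lev_sorted M (S : {set 'I_(2 ^ M)}) v : sorted (fun x y => y < x) (lev S v).
Proof.
apply: sorted_filter; first by move=> x y z /= h1 h2; apply: ltn_trans h1.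
by rewrite rev_sorted; apply: iota_ltn_sorted.
Qed.

Lemma delta_wit M (S : {set 'I_(2 ^ M)}) (u v : 'I_(2 ^ M)) : u \in S -> u != v ->
  delta M u v \in lev S v.
Proof.
move=> uS uv; rewrite mem_filter mem_rev mem_iota add0n.
have uv' : (u : nat) != v by [].
case: (deltaP (ltn_ord u) (ltn_ord v) uv') => dM _ _.
apply/andP; split; last by rewrite leq0n dM.
by apply/existsP; exists u; rewrite uS uv eqxx.
Qed.

Lemma P_shift M (S : {set 'I_(2 ^ M)}) (u v : 'I_(2 ^ M)) e :
  agree u v (delta M u v) -> delta M u v < e -> e < M ->
  [exists w in S, (w != u) && (delta M w u == e)] ->
  [exists w in S, (w != v) && (delta M w v == e)].
Proof.
move=> ag lt eM /existsP[w /and3P[wS wu /eqP dwu]].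
have wu' : (w : nat) != u by [].
case: (deltaP (ltn_ord w) (ltn_ord u) wu') => _ h1 h2.
have s : sep w u e by rewrite -dwu.
have s' : sep w v e by apply: (sep_trans s _ lt) => i /ag <-.
case: (sep_delta (ltn_ord w) (ltn_ord v) eM s') => d _.
apply/existsP; exists w; rewrite wS d eqxx andbT /=.
by case: s' => hb _; apply: contraNneq hb => ->.
Qed.

Lemma word_inj M (S : {set 'I_(2 ^ M)}) : {in S &, injective (word S)}.
Proof.
move=> u v uS vS; apply: contra_eq => uv.
have uv' : (u : nat) != v by [].
have vu' : (v : nat) != u by rewrite eq_sym.
set d := delta M u v.
case: (deltaP (ltn_ord u) (ltn_ord v) uv') => dM hne ag.
have ag' : agree v u (delta M v u) by rewrite -delta_sym => i /ag ->.
have eI : rev (iota 0 M) = rev (iota d.+1 (M - d.+1)) ++ d :: rev (iota 0 d).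
  rewrite -rev_rcons -rev_cat; congr rev.
  rewrite {1}(_ : M = d + (1 + (M - d.+1))); last by lia.
  by rewrite iotaD iotaD /= add0n addn1 cat_rcons.
set P := fun (x : 'I_(2 ^ M)) (e : nat) => [exists w in S, (w != x) && (delta M w x == e)].
have hP : {in rev (iota d.+1 (M - d.+1)), P u =1 P v}.
  move=> e; rewrite mem_rev mem_iota => /andP[h1 h2].
  have eM : e < M by lia.
  rewrite /P; apply/idP/idP.
  - exact: (P_shift ag).
  - apply: (P_shift ag') => //; by rewrite delta_sym.
have du : P u d by apply/existsP; exists v; rewrite vS vu' /= delta_sym eqxx.
have dv : P v d by apply/existsP; exists u; rewrite uS uv' /= eqxx.
rewrite /word /lev eI !filter_cat /= -/(P u d) -/(P v d) du dv.
rewrite -/(P u) -/(P v) (eq_in_filter hP) !map_cat /=.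
set X := filter _ _.
have -> : [seq bit u e | e <- X] = [seq bit v e | e <- X].
  apply/eq_in_map => e; rewrite mem_filter mem_rev mem_iota => /andP[_ /andP[h1 _]].
  by apply: ag.
apply/negP => /eqP /(congr1 (fun s => nth false s (size X))).
by rewrite !nth_cat size_map ltnn subnn /=; apply/eqP.
Qed.


Fixpoint allb (k : nat) (P : seq bool -> bool) : bool :=
  if k is k'.+1 then allb k' (fun l => P (true :: l)) && allb k' (fun l => P (false :: l))
  else P [::].

Lemma allbP k P l : allb k P -> size l = k -> P l.
Proof.
elim: k P l => [|k IH] P [|x l] //= /andP[h1 h2] [hs].
by case: x; [apply: (IH _ _ h1) | apply: (IH _ _ h2)].
Qed.

Definition alt (b : bool) (i : nat) := if odd i then ~~ b else b.

Definition okc b (core : seq (nat * nat * nat * nat * nat * nat)) (l : seq bool) :=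
  all (fun tr => let: (i, j, t, a1, a2, a3) := tr in
         C (alt b i) (alt b j) (nth false l a1) (nth false l a2) (nth false l a3)) core.

Definition wf (core : seq (nat * nat * nat * nat * nat * nat)) (vars : seq (nat * nat)) :=
  all (fun tr => let: (i, j, t, a1, a2, a3) := tr in
    [&& i < j, j < t, t < 7, a1 < size vars, a2 < size vars, a3 < size vars &
     [&& nth (0, 0) vars a1 == (t, j), nth (0, 0) vars a2 == (j, i) & nth (0, 0) vars a3 == (t, i)]]) core.

Lemma refl_contra b core vars (g : nat -> nat -> bool) :
  (forall i j t, i < j -> j < t -> t < 7 -> C (alt b i) (alt b j) (g t j) (g j i) (g t i)) ->
  wf core vars -> allb (size vars) (fun l => ~~ okc b core l) -> False.
Proof.
move=> H hwf hall.
set l := [seq g p.1 p.2 | p <- vars].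
have hn : ~~ okc b core l := allbP hall (size_map _ _).
move/negP: hn; apply; rewrite /okc.
have hgl a x y : a < size vars -> nth (0, 0) vars a == (x, y) -> nth false l a = g x y.
  by move=> ha /eqP he; rewrite (nth_map (0, 0)) // he.
apply/allP => [[[[[[i j] t] a1] a2] a3]] hin.
move/allP: hwf => /(_ _ hin) /and3P[h1 h2 /and5P[h3 s1 s2 s3 /and3P[v1 v2 v3]]].
by rewrite (hgl _ _ _ s1 v1) (hgl _ _ _ s2 v2) (hgl _ _ _ s3 v3); apply: H.
Qed.

Definition varsA : seq (nat * nat) := [:: (4, 2); (2, 1); (4, 1); (4, 3); (3, 2); (6, 1); (1, 0); (6, 0); (6, 5); (5, 0); (6, 2); (6, 4); (6, 3); (5, 2); (5, 4)].
Definition coreA : seq (nat * nat * nat * nat * nat * nat) := [:: (1, 2, 4, 0, 1, 2); (2, 3, 4, 3, 4, 0); (0, 1, 6, 5, 6, 7); (0, 5, 6, 8, 9, 7); (1, 2, 6, 10, 1, 5); (1, 4, 6, 11, 2, 5); (2, 3, 6, 12, 4, 10); (2, 5, 6, 8, 13, 10); (3, 4, 6, 11, 3, 12); (4, 5, 6, 8, 14, 11)].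
Definition varsB : seq (nat * nat) := [:: (3, 1); (1, 0); (3, 0); (3, 2); (2, 1); (5, 1); (5, 0); (5, 3); (5, 2); (5, 4); (4, 3); (6, 1); (6, 0); (6, 3); (6, 5); (6, 2); (6, 4); (4, 1)].
Definition coreB : seq (nat * nat * nat * nat * nat * nat) := [:: (0, 1, 3, 0, 1, 2); (1, 2, 3, 3, 4, 0); (0, 1, 5, 5, 1, 6); (0, 3, 5, 7, 2, 6); (2, 3, 5, 7, 3, 8); (3, 4, 5, 9, 10, 7); (0, 1, 6, 11, 1, 12); (0, 3, 6, 13, 2, 12); (0, 5, 6, 14, 6, 12); (1, 2, 6, 15, 4, 11); (1, 4, 6, 16, 17, 11); (1, 5, 6, 14, 5, 11); (2, 3, 6, 13, 3, 15); (2, 5, 6, 14, 8, 15); (3, 4, 6, 16, 10, 13); (3, 5, 6, 14, 7, 13); (4, 5, 6, 14, 9, 16)].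

Lemma checkA : allb 15 (fun l => ~~ okc true coreA l).
Proof. vm_compute. reflexivity. Qed.

Lemma checkB : allb 18 (fun l => ~~ okc false coreB l).
Proof. vm_compute. reflexivity. Qed.

Lemma seven b (g : nat -> nat -> bool) :
  (forall i j t, i < j -> j < t -> t < 7 -> C (alt b i) (alt b j) (g t j) (g j i) (g t i)) ->
  False.
Proof.
case: b => H.
  by apply: (refl_contra (vars := varsA) H _ checkA); vm_compute.
by apply: (refl_contra (vars := varsB) H _ checkB); vm_compute.
Qed.


Fixpoint hasalt (s : seq bool) (k : nat) (b : bool) : bool :=
  if k is k'.+1 then
    (if s is c :: s' then ((c == b) && hasalt s' k' (~~ b)) || hasalt s' k b else false)
  else true.

Lemma hasalt0 s b : hasalt s 0 b = true. Proof. by case: s. Qed.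

Lemma hasalt_idx s k b : hasalt s k b ->
  exists idx : seq nat, [/\ size idx = k, sorted ltn idx, all (fun x => x < size s) idx &
    forall m, m < k -> nth false s (nth 0 idx m) = alt b m].
Proof.
elim: s k b => [|c s IH] [|k] b //=.
- by move=> _; exists [::].
- by move=> _; exists [::].
case/orP => [/andP[/eqP cb h] | h].
  case: (IH _ _ h) => idx [h1 h2 h3 h4].
  exists (0 :: map S idx); split => /=.
  - by rewrite size_map h1.
  - rewrite path_min_sorted; first by rewrite sorted_map.
    by apply/allP => x /mapP[y _ ->].
  - by rewrite all_map; apply: sub_all h3 => x /=.
  case=> [|m] hm /=; first by rewrite cb.
  rewrite (nth_map 0) ?h1 //= h4 // /alt /=.
  by case: (odd m); rewrite ?negbK.
case: (IH _ _ h) => idx [h1 h2 h3 h4].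
exists (map S idx); split => //.
- by rewrite size_map.
- by rewrite sorted_map.
- by rewrite all_map; apply: sub_all h3 => x /=.
by move=> m hm; rewrite (nth_map 0) ?h1 //= h4.
Qed.

Lemma hasalt_cat s t k b : hasalt t k b -> hasalt (s ++ t) k b.
Proof.
elim: s => //= c s IH h.
case: k IH h => [|k] IH h //=.
by rewrite IH ?orbT.
Qed.

Fixpoint dec (c : bool) (rs : seq nat) : seq bool :=
  if rs is r :: rs' then nseq r c ++ dec (~~ c) rs' else [::].

Lemma dec_zeros k c : dec c (nseq k 0) = [::].
Proof. by elim: k c => //= k IH c; rewrite IH. Qed.

Lemma dec_noalt k b s : ~~ hasalt s k.+1 b -> exists rs, size rs = k.+1 /\ s = dec (~~ b) rs.
Proof.
elim: k b s => [|k IH] b s.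
  move=> h; exists [:: size s]; split => //=; rewrite cats0.
  elim: s h => //= c s IHs; rewrite negb_or => /andP[h1 h2].
  rewrite -IHs //; congr cons.
  by clear IHs h2; rewrite hasalt0 andbT in h1; case: c b h1 => [] [].
elim: s => [|c s IHs] h.
  exists (nseq k.+2 0); split; first by rewrite size_nseq.
  by rewrite dec_zeros.
move: h; rewrite /= negb_or => /andP[h1 h2].
case cb: (c == b) in h1.
  rewrite /= in h1.
  case: (IH _ _ h1) => [[|r' rs''] [hsz hs']] //.
  exists (0 :: r'.+1 :: rs''); split; first by move: hsz => /= [->].
  by rewrite /= !negbK hs' /= !negbK (eqP cb).
case: (IHs h2) => [[|r rs'] [hsz hs']] //.
exists (r.+1 :: rs'); split => //.
rewrite /= hs' /=; congr cons.
by move/negbT: cb; case: c; case: (b).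
Qed.

Lemma dec_count c rs x : x \in rs ->
  x <= maxn (count_mem true (dec c rs)) (count_mem false (dec c rs)).
Proof.
elim: rs c => //= r rs IH c; rewrite inE => /orP[/eqP -> | hx].
  have H1 : r <= count_mem c (nseq r c ++ dec (~~ c) rs).
    by rewrite count_cat count_nseq /= eqxx mul1n leq_addr.
  by rewrite leq_max; case: c H1 => ->; rewrite ?orbT.
apply: leq_trans (IH (~~ c) hx) _.
by rewrite !count_cat geq_max !leq_max !leq_addl ?orbT.
Qed.


Definition Good (w : seq bool) (g : nat -> nat -> bool) :=
  forall i j t, i < j -> j < t -> t < size w ->
    C (nth false w i) (nth false w j) (g t j) (g j i) (g t i).

Lemma good_noalt w g : Good w g -> forall b, ~~ hasalt (take (size w).-1 w) 6 b.
Proof.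
move=> hG b; apply/negP => h.
case: (hasalt_idx h) => idx [hsz hsort hall hnth].
set T := (size w).-1.
have hT : size (take T w) <= T by rewrite size_take; case: ltnP => // /ltnW.
have hidx : forall m, m < 6 -> nth 0 idx m < T.
  move=> m hm; apply: leq_trans hT; apply: (allP hall); apply: mem_nth; by rewrite hsz.
have hw : 0 < size w.
  have := hidx 0 isT; rewrite /T; case: (size w) => //.
have hTw : T < size w by rewrite /T prednK.
pose f m := nth 0 (rcons idx T) m.
have f6 : f 6 = T by rewrite /f nth_rcons hsz ltnn eqxx.
have fm m : m < 6 -> f m = nth 0 idx m by move=> hm; rewrite /f nth_rcons hsz hm.
have finc a c : a < c -> c < 7 -> f a < f c.
  move=> hac hc; have ha : a < 6 by lia.
  case: (ltnP c 6) => hc6.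
    rewrite !fm //; apply: (sorted_ltn_nth ltn_trans 0 hsort); by rewrite ?inE ?hsz.
  have -> : c = 6 by lia.
  by rewrite f6 fm // hidx.
have fle m : m < 7 -> f m <= T.
  move=> hm; case: (ltnP m 6) => hm6; first by rewrite fm // ltnW // hidx.
  have -> : m = 6 by lia.
  by rewrite f6.
have fnth m : m < 6 -> nth false w (f m) = alt b m.
  move=> hm; rewrite -(hnth _ hm) fm // nth_take //; exact: hidx.
apply: (@seven b (fun a c => g (f a) (f c))) => i j t hij hjt ht.
rewrite -!fnth; try lia.
apply: hG; try apply: finc => //; try lia.
by apply: leq_ltn_trans (fle _ ht) hTw.
Qed.

Lemma lev_uniq M (S : {set 'I_(2 ^ M)}) v : uniq (lev S v).
Proof. by apply: filter_uniq; rewrite rev_uniq iota_uniq. Qed.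

Lemma word_good M phi (S : {set 'I_(2 ^ M)}) v :
  independent M phi S -> (forall x y, x < M -> y < M -> phi x y = phi y x) ->
  v \in S -> Good (word S v) (fun a c => phi (nth 0 (lev S v) a) (nth 0 (lev S v) c)).
Proof.
move=> hI hsym vS i j t hij hjt ht.
have hs : size (word S v) = size (lev S v) by rewrite size_map.
rewrite hs in ht.
have hsort := sorted_ltn_nth (leT := fun x y => y < x) (fun a b c h1 h2 => ltn_trans h2 h1) 0 (lev_sorted S v).
rewrite !(nth_map 0); try lia.
have hi' : i < size (lev S v) by apply: ltn_trans hij (ltn_trans hjt ht).
have hj' : j < size (lev S v) by apply: ltn_trans hjt ht.
apply: (constr hI hsym vS); [exact: mem_nth|exact: mem_nth|exact: mem_nth|
  apply: (hsort j t)|apply: (hsort i j)]; by rewrite ?inE.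
Qed.

Lemma count_bound n M phi (S : {set 'I_(2 ^ M)}) v c :
  independent M phi S -> (forall x y, x < M -> y < M -> phi x y = phi y x) ->
  (forall S : {set 'I_M}, #|S| = n ->
     exists x y z : 'I_M, [/\ x \in S, y \in S, z \in S & x < y < z] /\
       phi x y = phi y z /\ phi y z != phi x z) ->
  v \in S -> count_mem c (word S v) < n.
Proof.
move=> hI hsym hyp vS; rewrite ltnNge; apply/negP => hn.
set s := [seq e <- lev S v | bit v e == c].
have hcs : count_mem c (word S v) = size s by rewrite count_map size_filter.
have sM : all (fun x => x < M) s.
  apply/allP => x; rewrite mem_filter => /andP[_ /(levP vS)[]] //.
pose L := pmap (insub : nat -> option 'I_M) s.
have hL : size L = size s.
  rewrite /L size_pmap_sub; apply/eqP; rewrite -all_count; exact: sM.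
have uL : uniq L by apply: pmap_sub_uniq; apply: filter_uniq; exact: lev_uniq.
set T := [set x in take n L].
have hT : #|T| = n.
  rewrite cardsE; move/card_uniqP: (take_uniq n uL) => ->.
  by rewrite size_take hL -hcs; case: ltnP => // h; apply/eqP; rewrite eqn_leq h hn.
case: (hyp T hT) => x [y [z [[xT yT zT /andP[xy yz]] [h1 h2]]]].
have memT (a : 'I_M) : a \in T -> ((a : nat) \in lev S v) /\ bit v a = c.
  rewrite inE => /mem_take; rewrite mem_pmap_sub mem_filter => /andP[/eqP -> ->] //.
case: (memT _ xT) => hx bx; case: (memT _ yT) => hy hyb; case: (memT _ zT) => hz bz.
have := constr hI hsym vS hz hy hx xy yz.
rewrite hyb bz /C eqxx h1 h2 eqxx.
by [].
Qed.


Definition Xt (n : nat) := option (option (bool * ('I_n * 'I_n * 'I_n * 'I_n * 'I_n)) * bool).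

Definition decode n (x : Xt n) : seq bool :=
  match x with
  | None => [::]
  | Some (None, l) => [:: l]
  | Some (Some (c, (r1, r2, r3, r4, r5)), l) =>
      rcons (c :: dec c [:: val r1; val r2; val r3; val r4; val r5]) l
  end.

Lemma card_Xt n : #|{: Xt n}| = (1 + 2 * n ^ 5) * 2 + 1.
Proof.
rewrite card_option card_prod card_option card_prod !card_prod card_bool !card_ord.
by rewrite -!mulnA !expnS expn0 muln1 addn1 /=.
Qed.

Lemma encode n w : 0 < n -> (forall b, ~~ hasalt (take (size w).-1 w) 6 b) ->
  count_mem true w < n -> count_mem false w < n -> exists x : Xt n, decode x = w.
Proof.
move=> n0 hna ht hf.
case/lastP: w hna ht hf => [|u l] hna ht hf; first by exists None.
rewrite size_rcons /= -cats1 take_size_cat // in hna.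
case: u hna ht hf => [|c u] hna ht hf; first by exists (Some (None, l)).
have h5 : ~~ hasalt u 5 (~~ c).
  by apply: contra (hna c) => h; rewrite /= eqxx h.
case: (dec_noalt h5) => rs [hsz hu]; rewrite negbK in hu.
have hcnt : forall x, x \in rs -> x < n.
  move=> x hx; have := dec_count c hx; rewrite -hu => hle.
  apply: leq_ltn_trans hle _; rewrite gtn_max.
  move: ht hf; rewrite -cats1 /= !count_cat /=.
  by move=> h1 h2; apply/andP; split; lia.
case: rs hsz hu hcnt => [|r1 [|r2 [|r3 [|r4 [|r5 [|? ?]]]]]] // _ hu hcnt.
have o1 : r1 < n by apply: hcnt; rewrite !inE eqxx.
have o2 : r2 < n by apply: hcnt; rewrite !inE eqxx ?orbT.
have o3 : r3 < n by apply: hcnt; rewrite !inE eqxx ?orbT.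
have o4 : r4 < n by apply: hcnt; rewrite !inE eqxx ?orbT.
have o5 : r5 < n by apply: hcnt; rewrite !inE eqxx ?orbT.
exists (Some (Some (c, (Ordinal o1, Ordinal o2, Ordinal o3, Ordinal o4, Ordinal o5)), l)).
by rewrite /= hu.
Qed.


Theorem mainTheorem4 (n M : nat) (phi : nat -> nat -> bool) :
  5 <= n -> 1 <= M ->
  (forall x y, x < M -> y < M -> phi x y = phi y x) ->
  (forall S : {set 'I_M}, #|S| = n ->
     exists x y z : 'I_M, [/\ x \in S, y \in S, z \in S & x < y < z] /\
       phi x y = phi y z /\ phi y z != phi x z) ->
  forall S : {set 'I_(2 ^ M)}, independent M phi S ->
    #|S| < 2 ^ 6 * n ^ 5 + 1.
Proof.
move=> n5 M1 hsym hyp S hI.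
have n0 : 0 < n by apply: leq_trans n5.
have enc v : v \in S -> exists x : Xt n, decode x = word S v.
  move=> vS; apply: encode => //.
  - exact: good_noalt (word_good hI hsym vS).
  - exact: (count_bound true hI hsym hyp vS).
  - exact: (count_bound false hI hsym hyp vS).
pose f (v : 'I_(2 ^ M)) : Xt n := odflt None [pick x | decode x == word S v].
have fP v : v \in S -> decode (f v) = word S v.
  move=> vS; rewrite /f; case: pickP => [x /eqP //|h].
  by case: (enc v vS) => x hx; move: (h x); rewrite hx eqxx.
have finj : {in S &, injective f}.
  move=> u v uS vS huv; apply: (word_inj uS vS).
  by rewrite -(fP u uS) -(fP v vS) huv.
have := @leq_card_in _ _ f _ finj; rewrite card_Xt => h.
have hN5 : 0 < n ^ 5 by rewrite expn_gt0 n0.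
have key : (1 + 2 * n ^ 5) * 2 + 1 < 2 ^ 6 * n ^ 5 + 1.
  move: (n ^ 5) hN5 => N hN; rewrite (_ : 2 ^ 6 = 64) //; lia.
exact: leq_ltn_trans h key.
Qed.
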